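(* Let $n\ge2$ and $\theta\in\mathcal{M}(\mathrm{Cr}_n)$. Then $\theta\in\mathcal{AM}(\mathrm{Cr}_n)$ if and only if for every pair of distinct, non-disjoint maximal chains $C,D$ of $\mathrm{Cr}_n$, the chains $\theta(C)$ and $\theta(D)$ have opposite parities.
   Context: $\mathrm{Cr}_n$ is the poset $\{x_1,\dots,x_n,y_1,\dots,y_n\}$ whose only relations between distinct elements are $x_i<y_i$ ($1\le i\le n$), $x_{i+1}<y_i$ ($1\le i\le n-1$) and $x_1<y_n$; its maximal chains are exactly these $2n$ two-element chains. The chains $x_i<y_i$ are called odd, and $x_{i+1}<y_i$ ($1\le i\le n-1$) and $x_1<y_n$ are called even. For a finite connected poset $X$ and $x<y$, $e_{xy}$ denotes the incidence-algebra basis element and $B=\{e_{xy}:x<y\}$. For a bijection $\theta:B\to B$ and a maximal chain $C:u_1<\dots<u_k$, $\theta$ is increasing on $C$ if there is a maximal chain $D:v_1<\dots<v_k$ with $\theta(e_{u_iu_j})=e_{v_iv_j}$ for all $i<j$, decreasing if $\theta(e_{u_iu_j})=e_{v_{k-j+1}v_{k-i+1}}$ for all $i<j$; in either case $\theta(C)=D$. $\mathcal{M}(X)$ is the set of bijections $B\to B$ increasing or decreasing on every maximal chain. A walk is a sequence $u_0,\dots,u_m$ where for each $i$ one of $u_i,u_{i+1}$ covers the other; closed if $u_0=u_m$. For a closed walk $\Gamma:u_0,\dots,u_m=u_0$ and $z\in X$: $s^+_{\theta,\Gamma}(z)=|\{i: u_i<u_{i+1},\ \exists w>z,\ \theta(e_{zw})=e_{u_iu_{i+1}}\}|$,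 $s^-_{\theta,\Gamma}(z)=|\{i: u_i>u_{i+1},\ \exists w>z,\ \theta(e_{zw})=e_{u_{i+1}u_i}\}|$, $t^+_{\theta,\Gamma}(z)=|\{i: u_i<u_{i+1},\ \exists w<z,\ \theta(e_{wz})=e_{u_iu_{i+1}}\}|$, $t^-_{\theta,\Gamma}(z)=|\{i: u_i>u_{i+1},\ \exists w<z,\ \theta(e_{wz})=e_{u_{i+1}u_i}\}|$, $0\le i\le m-1$. $\theta$ is admissible if $s^+-s^-=t^+-t^-$ at every $z$ for every closed walk; $\mathcal{AM}(X)$ is the set of admissible elements of $\mathcal{M}(X)$. *)

(* Defs.v *)
From mathcomp Require Import all_boot all_order all_algebra.
Set Implicit Arguments. Unset Strict Implicit. Unset Printing Implicit Defensive.

Section Generic.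
Variables (T : finType) (lt : rel T).

(* The basis B = { e_{xy} : x < y }, e_{xy} represented by the pair (x, y). *)
Definition basisB := {p : T * T | lt p.1 p.2}.

Definition is_chain (c : seq T) : bool := sorted lt c.

Definition is_maxchain (c : seq T) : Prop :=
  is_chain c /\ forall c', is_chain c' -> {subset c <= c'} -> {subset c' <= c}.

(* theta is increasing on C with theta(C) = D:
   theta(e_{u_i u_j}) = e_{v_i v_j} for all i < j  (0-indexed positions) *)
Definition increasing_on (theta : basisB -> basisB) (C D : seq T) : Prop :=
  size D = size C /\
  forall (b : basisB) (i j : nat), i < j -> j < size C ->
    val b = (nth (val b).1 C i, nth (val b).1 C j) ->
    val (theta b) = (nth (val b).1 D i, nth (val b).1 D j).

(* theta is decreasing on C with theta(C) = D:
   theta(e_{u_i u_j}) = e_{v_{k-j+1} v_{k-i+1}} (1-indexed), i.e. with 0-indexed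
   positions i < j it maps to positions (k-1-j, k-1-i). *)
Definition decreasing_on (theta : basisB -> basisB) (C D : seq T) : Prop :=
  size D = size C /\
  forall (b : basisB) (i j : nat), i < j -> j < size C ->
    val b = (nth (val b).1 C i, nth (val b).1 C j) ->
    val (theta b) = (nth (val b).1 D (size C - 1 - j), nth (val b).1 D (size C - 1 - i)).

Definition maps_chain (theta : basisB -> basisB) (C D : seq T) : Prop :=
  is_maxchain D /\ (increasing_on theta C D \/ decreasing_on theta C D).

Definition inM (theta : basisB -> basisB) : Prop :=
  bijective theta /\
  forall C, is_maxchain C -> exists D, maps_chain theta C D.

Definition covers (u w : T) : bool := lt w u && [forall z, ~~ (lt w z && lt z u)].

Definition adj (a b : T) : bool := covers a b || covers b a.

(* A walk u_0, u_1, ..., u_m is given by u_0 and the list s = [u_1; ...; u_m]. *)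
Definition is_closed_walk (u0 : T) (s : seq T) : bool :=
  path adj u0 s && (last u0 s == u0).

Definition steps (u0 : T) (s : seq T) : seq (T * T) := zip (u0 :: s) s.

Definition s_plus (theta : basisB -> basisB) (u0 : T) (s : seq T) (z : T) : nat :=
  count (fun st : T * T => lt st.1 st.2 &&
           [exists b : basisB, ((val b).1 == z) && (val (theta b) == st)]) (steps u0 s).
Definition s_minus (theta : basisB -> basisB) (u0 : T) (s : seq T) (z : T) : nat :=
  count (fun st : T * T => lt st.2 st.1 &&
           [exists b : basisB, ((val b).1 == z) && (val (theta b) == (st.2, st.1))]) (steps u0 s).
Definition t_plus (theta : basisB -> basisB) (u0 : T) (s : seq T) (z : T) : nat :=
  count (fun st : T * T => lt st.1 st.2 &&
           [exists b : basisB, ((val b).2 == z) && (val (theta b) == st)]) (steps u0 s).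
Definition t_minus (theta : basisB -> basisB) (u0 : T) (s : seq T) (z : T) : nat :=
  count (fun st : T * T => lt st.2 st.1 &&
           [exists b : basisB, ((val b).2 == z) && (val (theta b) == (st.2, st.1))]) (steps u0 s).

Definition admissible (theta : basisB -> basisB) : Prop :=
  forall (u0 : T) (s : seq T), is_closed_walk u0 s -> forall z : T,
    ((s_plus theta u0 s z)%:Z - (s_minus theta u0 s z)%:Z =
     (t_plus theta u0 s z)%:Z - (t_minus theta u0 s z)%:Z)%R.

Definition inAM (theta : basisB -> basisB) : Prop := inM theta /\ admissible theta.

End Generic.

(* element (false, i) is x_{i+1}, element (true, i) is y_{i+1}  (i : 'I_n, 0-indexed) *)
Definition crown (n : nat) : finType := (bool * 'I_n)%type.
Definition cx (n : nat) (i : 'I_n) : crown n := (false, i).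
Definition cy (n : nat) (i : 'I_n) : crown n := (true, i).

(* strict order: x_i < y_i, x_{i+1} < y_i, x_1 < y_n  (indices mod n) *)
Definition crown_lt (n : nat) : rel (crown n) := fun a b =>
  [&& ~~ a.1, b.1 & ((val a.2 == val b.2) || (val a.2 == (val b.2).+1 %% n))].
Arguments crown_lt n : clear implicits.

Definition odd_chain (n : nat) (c : seq (crown n)) : Prop :=
  exists i : 'I_n, c = [:: cx i; cy i].
Definition even_chain (n : nat) (c : seq (crown n)) : Prop :=
  exists i : 'I_n, c = [:: cx (ordS i); cy i].

(* Main.v *)
Require Import Defs.
From mathcomp Require Import all_boot all_order all_algebra.
From mathcomp Require Import zify.
Set Implicit Arguments. Unset Strict Implicit. Unset Printing Implicit Defensive.
Import GRing.Theory.

Lemma sumz (I:finType) (P : pred I) (f : I -> nat) :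
  (((\sum_(i | P i) f i)%N)%:Z = \sum_(i | P i) (f i)%:Z)%R.
Proof. by rewrite -natz natr_sum; apply: eq_bigr => i _; rewrite natz. Qed.

Section Crown.
Variable n : nat.
Hypothesis hn : 1 < n.
Local Notation lt := (crown_lt n).
Local Notation B := (basisB lt).

Lemma lt_fst (a b : crown n) : lt a b -> a.1 = false.
Proof. by case/and3P; case: (a.1). Qed.
Lemma lt_snd (a b : crown n) : lt a b -> b.1 = true.
Proof. by case/and3P => _; case: (b.1). Qed.
Lemma lt_asym (a b : crown n) : lt a b -> ~~ lt b a.
Proof. by move=> h; apply/negP => /lt_snd; rewrite (lt_fst h). Qed.

Lemma ordS_neq (i : 'I_n) : ordS i != i.
Proof.
apply/eqP => /(congr1 val) /=. case: (ltngtP i.+1 n) => h.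
- rewrite modn_small //; lia.
- have := ltn_ord i; lia.
- rewrite h modnn => h0; lia.
Qed.

Lemma lt_o (k : 'I_n) : lt (cx k) (cy k).
Proof. by rewrite /crown_lt /= eqxx. Qed.
Lemma lt_e (k : 'I_n) : lt (cx (ordS k)) (cy k).
Proof. by rewrite /crown_lt /= eqxx orbT. Qed.

Definition bo (k : 'I_n) : B := exist _ (cx k, cy k) (lt_o k).
Definition be (k : 'I_n) : B := exist _ (cx (ordS k), cy k) (lt_e k).

Lemma b_cases (b : B) : b = bo (val b).2.2 \/ b = be (val b).2.2.
Proof.
case: b => [[[[] a2] [[] c2]] H] //=.
case/and3P: (H) => /= _ _ /orP [] /eqP e.
- left; apply: val_inj => /=.
  by rewrite /cx /cy; congr (_, _); congr (_, _); apply: val_inj.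
- right; apply: val_inj => /=.
  by rewrite /cx /cy; congr (_, _); congr (_, _); apply: val_inj.
Qed.

Lemma bo_be (k j : 'I_n) : bo k != be j.
Proof.
apply/eqP => /(congr1 val) /= [] e1 e2.
have : ordS j == j by rewrite -e1 e2.
by rewrite (negbTE (ordS_neq j)).
Qed.

Lemma bo_inj : injective bo.
Proof. by move=> k j /(congr1 val) [] ->. Qed.
Lemma be_inj : injective be.
Proof. by move=> k j /(congr1 val) [] _ ->. Qed.

Lemma bot_cases (k : 'I_n) (b : B) : (val b).1 = cx k -> b = bo k \/ b = be (ord_pred k).
Proof.
case: (b_cases b) => -> /=.
- by case=> ->; left.
- by case=> e; right; rewrite -e ordSK.
Qed.

Lemma top_cases (k : 'I_n) (b : B) : (val b).2 = cy k -> b = bo k \/ b = be k.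
Proof.
case: (b_cases b) => -> /=.
- by case=> ->; left.
- by case=> ->; right.
Qed.

Lemma sum_pair (R : Type) (idx : R) (op : Monoid.com_law idx) (P : pred B) b1 b2 (F : B -> R) :
  b1 != b2 -> P b1 -> P b2 -> (forall b, P b -> b = b1 \/ b = b2) ->
  \big[op/idx]_(b | P b) F b = op (F b1) (F b2).
Proof.
move=> ne p1 p2 H.
rewrite (bigD1 b1) // (bigD1 b2) /=; last by rewrite p2 eq_sym.
rewrite big1 ?Monoid.mulm1 // => b /andP [/andP [pb nb1] nb2].
by case: (H b pb) => e; [move: nb1|move: nb2]; rewrite e eqxx.
Qed.

Lemma sum_bot (R : Type) (idx : R) (op : Monoid.com_law idx) (k : 'I_n) (F : B -> R) :
  \big[op/idx]_(b | (val b).1 == cx k) F b = op (F (bo k)) (F (be (ord_pred k))).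
Proof.
apply: sum_pair; first exact: bo_be.
- by [].
- by rewrite /= ord_predK.
- by move=> b /eqP; apply: bot_cases.
Qed.

Lemma sum_top (R : Type) (idx : R) (op : Monoid.com_law idx) (k : 'I_n) (F : B -> R) :
  \big[op/idx]_(b | (val b).2 == cy k) F b = op (F (bo k)) (F (be k)).
Proof.
apply: sum_pair; first exact: bo_be.
- by [].
- by [].
- by move=> b /eqP; apply: top_cases.
Qed.

Lemma sum_bot0 (R : Type) (idx : R) (op : Monoid.com_law idx) (k : 'I_n) (F : B -> R) :
  \big[op/idx]_(b | (val b).2 == cx k) F b = idx.
Proof. by rewrite big1 // => b /eqP e; have := lt_snd (valP b); rewrite e. Qed.

Lemma sum_top0 (R : Type) (idx : R) (op : Monoid.com_law idx) (k : 'I_n) (F : B -> R) :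
  \big[op/idx]_(b | (val b).1 == cy k) F b = idx.
Proof. by rewrite big1 // => b /eqP e; have := lt_fst (valP b); rewrite e. Qed.


Definition chain (b : B) : seq (crown n) := [:: (val b).1; (val b).2].
Definition sigma (b : B) : int := if (val b).1.2 == (val b).2.2 then 1%R else (-1)%R.

Lemma npos : 0 < n. Proof. by apply: ltn_trans hn. Qed.
Definition k0 : 'I_n := Ordinal npos.

Lemma pair_eta (a : crown n) : a = (a.1, a.2). Proof. by case: a. Qed.

Lemma lt_pair (a b : crown n) : lt a b -> a = cx a.2 /\ b = cy b.2.
Proof. by move=> h; rewrite /cx /cy -(lt_fst h) -(lt_snd h); split; case: (a); case: (b). Qed.

Lemma maxchain_chain (b : B) : is_maxchain lt (chain b).
Proof.
case: b => [[a c] H]; rewrite /chain /=; split; first by rewrite /is_chain /= H.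
move=> [|p [|q [|r t]]] //=.
- move=> _ sub.
  have : a \in [:: p] by apply: sub; rewrite !inE eqxx.
  rewrite inE => /eqP ea.
  have : c \in [:: p] by apply: sub; rewrite !inE eqxx orbT.
  rewrite inE => /eqP ec.
  by have := lt_fst H; rewrite ea -ec (lt_snd H).
- rewrite /is_chain /= andbT => hpq sub x.
  have ha : a \in [:: p; q] by apply: sub; rewrite !inE eqxx.
  have hc : c \in [:: p; q] by apply: sub; rewrite !inE eqxx orbT.
  rewrite !inE in ha hc.
  have eap : a = p.
    case/orP: ha => /eqP // eaq; have := lt_fst H; by rewrite eaq (lt_snd hpq).
  have ecq : c = q.
    case/orP: hc => /eqP // ecp; have := lt_snd H; by rewrite ecp (lt_fst hpq).
  by rewrite !inE eap ecq.
- by rewrite /is_chain /= => /and3P [h1 h2 _]; have := lt_fst h2; rewrite (lt_snd h1).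
Qed.

Lemma maxchain_inv (C : seq (crown n)) : is_maxchain lt C -> exists b, C = chain b.
Proof.
case=> hc hmax; move: C hc hmax => [|a [|b [|c t]]] /=.
- move=> _ H.
  have sub : {subset [::] <= chain (bo k0)} by [].
  by have := H _ (maxchain_chain (bo k0)).1 sub (cx k0); rewrite /chain !inE eqxx => /(_ isT).
- case: a => [[] k] _ H.
  + have sub : {subset [:: (true, k)] <= chain (bo k)}.
      by move=> x; rewrite !inE => /eqP ->; rewrite eqxx orbT.
    by have := H _ (maxchain_chain (bo k)).1 sub (cx k); rewrite /chain !inE eqxx => /(_ isT).
  + have sub : {subset [:: (false, k)] <= chain (bo k)}.
      by move=> x; rewrite !inE => /eqP ->; rewrite eqxx.
    by have := H _ (maxchain_chain (bo k)).1 sub (cy k); rewrite /chain !inE eqxx orbT => /(_ isT).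
- rewrite /is_chain /= andbT => hab _.
  by exists (exist _ (a, b) hab).
- by rewrite /is_chain /= => /and3P [h1 h2 _]; have := lt_fst h2; rewrite (lt_snd h1).
Qed.

Lemma maps_det (theta : B -> B) (b : B) C' :
  maps_chain theta (chain b) C' -> C' = chain (theta b).
Proof.
case=> _ [[hs H]|[hs H]]; move: hs H; case: C' => [|p [|q [|r t]]] //= _ H;
  by have := H b 0 1 isT isT (surjective_pairing _); rewrite /chain; case: (theta b) => [[x y] hxy] /= [-> ->].
Qed.

Lemma odd_sigma (e : B) : odd_chain (chain e) <-> sigma e = 1%R.
Proof.
rewrite /odd_chain /sigma; split.
- by case=> i [-> ->]; rewrite eqxx.
- case: eqP => // eq _; exists (val e).2.2.
  have [h1 h2] := lt_pair (valP e).
  by rewrite /chain {1}h1 {1}h2 eq.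
Qed.

Lemma even_sigma (e : B) : even_chain (chain e) <-> sigma e = (-1)%R.
Proof.
rewrite /even_chain /sigma; split.
- by case=> i [-> ->] /=; rewrite (negbTE (ordS_neq i)).
- case: eqP => // ne _; exists (val e).2.2.
  have [h1 h2] := lt_pair (valP e).
  rewrite /chain {1}h1 {1}h2; congr [:: cx _; _].
  apply: val_inj => /=; case/and3P: (valP e) => _ _ /orP [/eqP h|/eqP ->] //.
  by case: ne; apply: val_inj.
Qed.


Lemma val_lt (b : B) (a c : crown n) : val b = (a, c) -> lt a c.
Proof. by case: b => [[x y] h] /= [<- <-]. Qed.

Lemma count_ex (X : eqType) (g : B -> X) (Q : pred B) (l : seq X) :
  injective g ->
  count (fun st => [exists b, Q b && (g b == st)]) l = (\sum_(b | Q b) count (pred1 (g b)) l)%N.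
Proof.
move=> ginj; elim: l => [|x l IH] /=; first by rewrite big1.
rewrite IH big_split /=; congr (_ + _)%N.
case: existsP => [[b0 /andP [q0 /eqP e0]]|nex].
- rewrite (bigD1 b0) //= big1 ?addn0; first by rewrite e0 eqxx.
  move=> b /andP [qb nb]; case: eqP => // e; case/negP: nb; apply/eqP; apply: ginj.
  by rewrite -e e0.
- rewrite big1 // => b qb; case: eqP => // e; case: nex; exists b; by rewrite qb -e eqxx.
Qed.

Definition net (l : seq (crown n * crown n)) (p : crown n * crown n) : int :=
  ((count (pred1 p) l)%:Z - (count (pred1 (p.2, p.1)) l)%:Z)%R.

Definition swp (p : crown n * crown n) := (p.2, p.1).
Lemma swp_inj : injective swp. Proof. by case=> a b [c d] [-> ->]. Qed.

Lemma sdiff (theta : B -> B) (tinj : injective theta) u0 s z :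
  ((s_plus theta u0 s z)%:Z - (s_minus theta u0 s z)%:Z =
   \sum_(b | (val b).1 == z) net (steps u0 s) (val (theta b)))%R.
Proof.
rewrite /s_plus /s_minus /net sumrB -!sumz.
rewrite (eq_count (a2 := fun st => [exists b, ((val b).1 == z) && ((val \o theta) b == st)])).
  rewrite (count_ex _ _ (inj_comp val_inj tinj)).
  rewrite (eq_count (a2 := fun st => [exists b, ((val b).1 == z) && ((swp \o val \o theta) b == st)])).
    by rewrite (count_ex _ _ (inj_comp swp_inj (inj_comp val_inj tinj))).
  move=> [a c] /=; case: existsP => [[b /andP [q /eqP e]]|nex].
    rewrite (val_lt e) /=; apply/esym/existsP; exists b; by rewrite q /= /swp e.
  rewrite andbF; apply/esym/existsP => [[b /andP [q /eqP e]]]; case: nex; exists b.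
  by rewrite q /=; apply/eqP; apply: swp_inj; exact: e.
move=> [a c] /=; case: existsP => [[b /andP [q /eqP e]]|nex].
  by rewrite (val_lt e).
by rewrite andbF.
Qed.

Lemma tdiff (theta : B -> B) (tinj : injective theta) u0 s z :
  ((t_plus theta u0 s z)%:Z - (t_minus theta u0 s z)%:Z =
   \sum_(b | (val b).2 == z) net (steps u0 s) (val (theta b)))%R.
Proof.
rewrite /t_plus /t_minus /net sumrB -!sumz.
rewrite (eq_count (a2 := fun st => [exists b, ((val b).2 == z) && ((val \o theta) b == st)])).
  rewrite (count_ex _ _ (inj_comp val_inj tinj)).
  rewrite (eq_count (a2 := fun st => [exists b, ((val b).2 == z) && ((swp \o val \o theta) b == st)])).
    by rewrite (count_ex _ _ (inj_comp swp_inj (inj_comp val_inj tinj))).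
  move=> [a c] /=; case: existsP => [[b /andP [q /eqP e]]|nex].
    rewrite (val_lt e) /=; apply/esym/existsP; exists b; by rewrite q /= /swp e.
  rewrite andbF; apply/esym/existsP => [[b /andP [q /eqP e]]]; case: nex; exists b.
  by rewrite q /=; apply/eqP; apply: swp_inj; exact: e.
move=> [a c] /=; case: existsP => [[b /andP [q /eqP e]]|nex].
  by rewrite (val_lt e).
by rewrite andbF.
Qed.


Lemma adj_lt (a c : crown n) : adj lt a c = lt a c || lt c a.
Proof.
have cov : forall u w : crown n, covers lt u w = lt w u.
  move=> u w; rewrite /covers; case h: (lt w u) => //=.
  apply/forallP => x; apply/negP => /andP [h1 h2].
  by have := lt_snd h1; rewrite (lt_fst h2).
by rewrite /adj !cov orbC.
Qed.

Lemma all_adj u0 s : path (adj lt) u0 s -> all (fun st : crown n * crown n => adj lt st.1 st.2) (steps u0 s).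
Proof. by elim: s u0 => [|a s IH] u0 //= /andP [-> /IH]. Qed.

Lemma conserv_count u0 s v : last u0 s = u0 ->
  count (fun st : crown n * crown n => st.1 == v) (steps u0 s) =
  count (fun st : crown n * crown n => st.2 == v) (steps u0 s).
Proof.
have gen : forall u, (count (fun st : crown n * crown n => st.1 == v) (steps u s) + (last u s == v) =
   (u == v) + count (fun st : crown n * crown n => st.2 == v) (steps u s))%N.
  elim: s => [|a t IH] u /=; first by rewrite addnC.
  rewrite /steps /= in IH *. by rewrite -addnA IH; lia.
move=> el; have := gen u0; rewrite el; lia.
Qed.

Lemma count_add (X : eqType) (p a c : pred X) (l : seq X) :
  (forall x, x \in l -> p x = (a x + c x)%N :> nat) -> count p l = (count a l + count c l)%N.
Proof.
elim: l => [|x l IH] //= H.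
rewrite H ?inE ?eqxx // IH; first lia.
by move=> y hy; apply: H; rewrite inE hy orbT.
Qed.

Lemma count_dec1 (l : seq (crown n * crown n)) v :
  all (fun st : crown n * crown n => adj lt st.1 st.2) l ->
  count (fun st : crown n * crown n => st.1 == v) l =
  (\sum_(b : B | (val b).1 == v) count (pred1 (val b)) l +
   \sum_(b : B | (val b).2 == v) count (pred1 (swp (val b))) l)%N.
Proof.
move=> /allP hall.
rewrite -(count_ex _ _ val_inj) -(count_ex _ _ (inj_comp swp_inj val_inj)).
apply: count_add => [[a c]] /hall /=; rewrite adj_lt => /orP [] h.
- have h' := lt_asym h.
  have -> : [exists b : B, ((val b).2 == v) && (swp (val b) == (a, c))] = false.
    apply/existsP => [[b /andP [_ /eqP e]]].
    by have := val_lt (@swp_inj (val b) (c, a) e); rewrite (negbTE h').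
  rewrite /= addn0; case: eqP => [<-|ne].
    case: existsP => // nex; case: nex; exists (exist _ (a, c) h); by rewrite /= !eqxx.
  case: existsP => // [[b /andP [/eqP e1 /eqP e2]]]; case: ne; by rewrite -e1 e2.
- have h' := lt_asym h.
  have -> : [exists b : B, ((val b).1 == v) && (val b == (a, c))] = false.
    apply/existsP => [[b /andP [_ /eqP e]]].
    by have := val_lt e; rewrite (negbTE h').
  rewrite /= add0n; case: eqP => [<-|ne].
    case: existsP => // nex; case: nex; exists (exist _ (c, a) h); by rewrite /= !eqxx.
  case: existsP => // [[b /andP [/eqP e1 /eqP e2]]]; case: ne.
  by rewrite -e1 (@swp_inj (val b) (c, a) e2).
Qed.

Lemma count_dec2 (l : seq (crown n * crown n)) v :
  all (fun st : crown n * crown n => adj lt st.1 st.2) l ->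
  count (fun st : crown n * crown n => st.2 == v) l =
  (\sum_(b : B | (val b).2 == v) count (pred1 (val b)) l +
   \sum_(b : B | (val b).1 == v) count (pred1 (swp (val b))) l)%N.
Proof.
move=> /allP hall.
rewrite -(count_ex _ _ val_inj) -(count_ex _ _ (inj_comp swp_inj val_inj)).
apply: count_add => [[a c]] /hall /=; rewrite adj_lt => /orP [] h.
- have h' := lt_asym h.
  have -> : [exists b : B, ((val b).1 == v) && (swp (val b) == (a, c))] = false.
    apply/existsP => [[b /andP [_ /eqP e]]].
    by have := val_lt (@swp_inj (val b) (c, a) e); rewrite (negbTE h').
  rewrite /= addn0; case: eqP => [<-|ne].
    case: existsP => // nex; case: nex; exists (exist _ (a, c) h); by rewrite /= !eqxx.
  case: existsP => // [[b /andP [/eqP e1 /eqP e2]]]; case: ne; by rewrite -e1 e2.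
- have h' := lt_asym h.
  have -> : [exists b : B, ((val b).2 == v) && (val b == (a, c))] = false.
    apply/existsP => [[b /andP [_ /eqP e]]].
    by have := val_lt e; rewrite (negbTE h').
  rewrite /= add0n; case: eqP => [<-|ne].
    case: existsP => // nex; case: nex; exists (exist _ (c, a) h); by rewrite /= !eqxx.
  case: existsP => // [[b /andP [/eqP e1 /eqP e2]]]; case: ne.
  by rewrite -e1 (@swp_inj (val b) (c, a) e2).
Qed.

Lemma conserv u0 s v : is_closed_walk lt u0 s ->
  (\sum_(b : B | (val b).1 == v) net (steps u0 s) (val b) =
   \sum_(b : B | (val b).2 == v) net (steps u0 s) (val b))%R.
Proof.
case/andP => hp /eqP hl.
have ha := all_adj hp.
have := conserv_count v hl; rewrite (count_dec1 v ha) (count_dec2 v ha).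
rewrite /net !sumrB -!sumz.
set A := (\sum_(b | _) _)%N; set D := (\sum_(b | _) _)%N.
set C := (\sum_(b | _) _)%N; set E := (\sum_(b | _) _)%N.
rewrite /swp.
move=> h; lia.
Qed.


Lemma sigma_bo k : sigma (bo k) = 1%R. Proof. by rewrite /sigma /= eqxx. Qed.
Lemma sigma_be k : sigma (be k) = (-1)%R.
Proof. by rewrite /sigma /= (negbTE (ordS_neq k)). Qed.

Lemma walk_w u0 s : is_closed_walk lt u0 s ->
  exists w : int, forall b : B, net (steps u0 s) (val b) = (sigma b * w)%R.
Proof.
move=> hw; set N := fun b : B => net (steps u0 s) (val b).
have hx : forall k, (N (bo k) + N (be (ord_pred k)) = 0)%R.
  move=> k; have := conserv (cx k) hw.
  by rewrite sum_bot sum_bot0.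
have hy : forall k, (N (bo k) + N (be k) = 0)%R.
  move=> k; have := conserv (cy k) hw.
  by rewrite sum_top sum_top0 => ->.
have hS : forall k, N (bo (ordS k)) = N (bo k).
  move=> k; have := hx (ordS k); rewrite ordSK => h1; have := hy k.
  move: h1; set A := N _; set C := N _; set D := N _. move=> h1 h2; lia.
have hall : forall i (hi : i < n), N (bo (Ordinal hi)) = N (bo k0).
  elim=> [|i IH] hi.
    by congr (N (bo _)); apply: val_inj.
  have hi' : i < n by apply: ltnW.
  rewrite -(IH hi') -(hS (Ordinal hi')); congr (N (bo _)); apply: val_inj => /=.
  by rewrite modn_small.
have hall' : forall k, N (bo k) = N (bo k0) by case=> i hi; exact: hall.
exists (N (bo k0)) => b.
case: (b_cases b) => ->.
- by rewrite sigma_bo mul1r; exact: hall'.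
- rewrite sigma_be mulN1r; have h := hy (val b).2.2; rewrite (hall' (val b).2.2) in h.
  change (N (be (val b).2.2) = - N (bo k0))%R.
  by apply/eqP; rewrite -addr_eq0 addrC h.
Qed.


Definition inZ (i : nat) : 'I_n := Ordinal (ltn_pmod i npos).
Definition walk a m := flatten [seq [:: cy (inZ i); cx (inZ i.+1)] | i <- iota a m].
Definition fW (i : nat) := (cx (inZ i), cy (inZ i)).
Definition gW (i : nat) := (cy (inZ i), cx (inZ i.+1)).
Definition stepsW a m := flatten [seq [:: fW i; gW i] | i <- iota a m].

Lemma inZS i : inZ i.+1 = ordS (inZ i).
Proof. by apply: val_inj => /=; rewrite -[in RHS]addn1 modnDml addn1. Qed.

Lemma steps_walk a m : steps (cx (inZ a)) (walk a m) = stepsW a m.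
Proof.
elim: m a => [|m IH] a //=.
change (steps (cx (inZ a)) [:: cy (inZ a), cx (inZ a.+1) & walk a.+1 m] = [:: fW a, gW a & stepsW a.+1 m]).
by rewrite -IH.
Qed.

Lemma path_walk a m : path (adj lt) (cx (inZ a)) (walk a m).
elim: m a => [|m IH] a //.
change (path (adj lt) (cx (inZ a)) [:: cy (inZ a), cx (inZ a.+1) & walk a.+1 m]).
rewrite /= IH andbT !adj_lt lt_o inZS lt_e orbT //.
Qed.

Lemma last_walk a m : last (cx (inZ a)) (walk a m) = cx (inZ (a + m)).
Proof. by elim: m a => [|m IH] a /=; [rewrite addn0 | rewrite IH addSnnS]. Qed.

Lemma closed_W : is_closed_walk lt (cx (inZ 0)) (walk 0 n).
Proof.
rewrite /is_closed_walk path_walk last_walk add0n /=.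
by apply/eqP; congr cx; apply: val_inj; rewrite /= modnn mod0n.
Qed.

Lemma count_flat2 (X : Type) (p : pred (crown n * crown n)) (l : seq X) f g :
  count p (flatten [seq [:: f i; g i] | i <- l]) = (count p (map f l) + count p (map g l))%N.
Proof. by elim: l => [|x l IH] //=; rewrite IH addnACA addnA. Qed.

Lemma cntZ (P : pred 'I_n) : count (fun i => P (inZ i)) (iota 0 n) = count P (enum 'I_n).
Proof.
rewrite -val_enum_ord count_map; apply: eq_count => k /=.
by congr P; apply: val_inj; rewrite /= modn_small.
Qed.

Lemma cnt1 (P : pred 'I_n) k : (forall j, P j = (j == k)) -> count P (enum 'I_n) = 1%N.
Proof.
move=> H; rewrite (eq_count (a2 := pred1 k)); last by move=> j; exact: H.
by rewrite (count_uniq_mem _ (enum_uniq _)) mem_enum.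
Qed.

Lemma cnt0 (P : pred 'I_n) : (forall j, P j = false) -> count P (enum 'I_n) = 0%N.
Proof.
move=> H; rewrite (eq_count (a2 := pred0)); last by move=> j; exact: H.
by rewrite count_pred0.
Qed.

Lemma cnt_up p : count (pred1 p) (map fW (iota 0 n)) = count (fun j => (cx j, cy j) == p) (enum 'I_n).
Proof. by rewrite count_map -cntZ. Qed.
Lemma cnt_dn p : count (pred1 p) (map gW (iota 0 n)) = count (fun j => (cy j, cx (ordS j)) == p) (enum 'I_n).
Proof. rewrite count_map -cntZ; apply: eq_count => i /=; by rewrite /gW inZS. Qed.

Lemma netW (b : B) : net (stepsW 0 n) (val b) = sigma b.
Proof.
have nS : forall k : 'I_n, (ordS k == k) = false by move=> k; apply: negbTE; exact: ordS_neq.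
have nS' : forall k : 'I_n, (k == ordS k) = false by move=> k; rewrite eq_sym nS.
case: (b_cases b) => ->; set k := (val b).2.2; clearbody k.
- rewrite sigma_bo /net /stepsW !count_flat2 /= cnt_up cnt_dn cnt_up cnt_dn.
  rewrite (@cnt1 _ k); last by move=> j; rewrite !xpair_eqE /= andbb.
  rewrite cnt0; last by move=> j; rewrite !xpair_eqE.
  rewrite cnt0 //; move=> j; rewrite !xpair_eqE /=; case: eqP => // ->; exact: nS.
- rewrite sigma_be /net /stepsW !count_flat2 /= cnt_up cnt_dn cnt_up cnt_dn.
  rewrite (@cnt0 (fun j => (cx j, cy j) == (cx (ordS k), cy k))); last first.
    by move=> j; rewrite !xpair_eqE /=; case: eqP => // ->; rewrite nS.
  rewrite (@cnt0 (fun j => (cy j, cx (ordS j)) == (cx (ordS k), cy k))); last by move=> j; rewrite !xpair_eqE.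
  rewrite (@cnt1 (fun j => (cy j, cx (ordS j)) == (cy k, cx (ordS k))) k) //.
  by move=> j; rewrite !xpair_eqE /=; case: eqP => // ->; rewrite eqxx.
Qed.


Lemma pair_zero (F : B -> int)
  (h1 : forall k, (F (bo k) + F (be (ord_pred k)) = 0)%R)
  (h2 : forall k, (F (bo k) + F (be k) = 0)%R) (b1 b2 : B) :
  b1 != b2 -> has (fun u => u \in chain b2) (chain b1) -> (F b1 + F b2 = 0)%R.
Proof.
move=> ne /hasP [u]; rewrite /chain !inE => /orP [] /eqP e1 /orP [] /eqP e2.
- have [hc _] := lt_pair (valP b1).
  move: hc; set k := (val b1).1.2 => hc; clearbody k.
  have e12 : (val b2).1 = cx k by rewrite -e2 e1 -hc.
  case: (bot_cases hc) => E1; case: (bot_cases e12) => E2; rewrite E1 E2 in ne *.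
  + by rewrite eqxx in ne.
  + exact: h1.
  + by rewrite addrC.
  + by rewrite eqxx in ne.
- by have := lt_fst (valP b1); rewrite -e1 e2 (lt_snd (valP b2)).
- by have := lt_snd (valP b1); rewrite -e1 e2 (lt_fst (valP b2)).
- have [_ hc] := lt_pair (valP b1).
  move: hc; set k := (val b1).2.2 => hc; clearbody k.
  have e12 : (val b2).2 = cy k by rewrite -e2 e1 -hc.
  case: (top_cases hc) => E1; case: (top_cases e12) => E2; rewrite E1 E2 in ne *.
  + by rewrite eqxx in ne.
  + exact: h2.
  + by rewrite addrC.
  + by rewrite eqxx in ne.
Qed.

Lemma admW (theta : B -> B) (tinj : injective theta) (adm : admissible theta) z :
 (\sum_(b | (val b).1 == z) net (stepsW 0 n) (val (theta b)) =
  \sum_(b | (val b).2 == z) net (stepsW 0 n) (val (theta b)))%R.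
Proof.
  have h := adm _ _ closed_W z.
  have e1 := sdiff tinj (cx (inZ 0)) (walk 0 n) z.
  have e2 := tdiff tinj (cx (inZ 0)) (walk 0 n) z.
  rewrite steps_walk in e1 e2.
  exact: (etrans (esym e1) (etrans h e2)).
Qed.

Lemma adm_pairs (theta : B -> B) (tinj : injective theta) : admissible theta ->
  forall b1 b2 : B, b1 != b2 -> has (fun u => u \in chain b2) (chain b1) ->
  (sigma (theta b1) + sigma (theta b2) = 0)%R.
Proof.
move=> adm; apply: (pair_zero (F := fun b => sigma (theta b))) => k.
- have := admW tinj adm (cx k).
  rewrite sum_bot sum_bot0 !netW => h; exact: h.
- have := admW tinj adm (cy k).
  rewrite sum_top sum_top0 !netW => h; exact: (esym h).
Qed.

Lemma pairs_adm (theta : B -> B) (tinj : injective theta) :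
  (forall b1 b2 : B, b1 != b2 -> has (fun u => u \in chain b2) (chain b1) ->
    (sigma (theta b1) + sigma (theta b2) = 0)%R) -> admissible theta.
Proof.
move=> H u0 s hw z.
have [w hwb] := walk_w hw.
apply: (etrans (sdiff tinj u0 s z)); apply: (etrans _ (esym (tdiff tinj u0 s z))).
have e1 : forall k, (sigma (theta (bo k)) + sigma (theta (be (ord_pred k))) = 0)%R.
  move=> k; apply: H; first exact: bo_be.
  by apply/hasP; exists (cx k); rewrite /chain /= ?ord_predK !inE eqxx.
have e2 : forall k, (sigma (theta (bo k)) + sigma (theta (be k)) = 0)%R.
  move=> k; apply: H; first exact: bo_be.
  by apply/hasP; exists (cy k); rewrite /chain /= !inE eqxx ?orbT.
case: z => [[] k].
- rewrite -[(true, k)]/(cy k) sum_top sum_top0 !hwb; apply/esym.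
  transitivity ((sigma (theta (bo k)) + sigma (theta (be k))) * w)%R.
    by rewrite mulrDl.
  by rewrite e2 mul0r.
- rewrite -[(false, k)]/(cx k) sum_bot sum_bot0 !hwb.
  transitivity ((sigma (theta (bo k)) + sigma (theta (be (ord_pred k)))) * w)%R.
    by rewrite mulrDl.
  by rewrite e1 mul0r.
Qed.

End Crown.

Lemma chain_inj n (b1 b2 : basisB (crown_lt n)) : chain b1 = chain b2 -> b1 = b2.
Proof.
rewrite /chain => [[e1 e2]]; apply: val_inj.
by rewrite (surjective_pairing (val b1)) (surjective_pairing (val b2)) e1 e2.
Qed.

Lemma sigma_pm n (b : basisB (crown_lt n)) : sigma b = 1%R \/ sigma b = (-1)%R.
Proof. by rewrite /sigma; case: ifP; [left|right]. Qed.

Unset Implicit Arguments.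
Set Strict Implicit.

Theorem lemma4p9 (n : nat) (hn : 2 <= n)
    (theta : basisB (crown_lt n) -> basisB (crown_lt n)) :
  inM theta ->
  (inAM theta <->
   forall C D C' D' : seq (crown n),
     is_maxchain (crown_lt n) C -> is_maxchain (crown_lt n) D ->
     C <> D -> has (fun u => u \in D) C ->
     maps_chain theta C C' -> maps_chain theta D D' ->
     (odd_chain C' /\ even_chain D') \/ (even_chain C' /\ odd_chain D')).
Proof.
move=> hM; have tinj : injective theta by case: hM.1 => g h1 h2; apply: can_inj h1.
split.
- case=> _ adm C D C' D' hC hD ne hs hCC hDD.
  have [b1 e1] := maxchain_inv hn hC; have [b2 e2] := maxchain_inv hn hD.
  subst C D.
  rewrite (maps_det hCC) (maps_det hDD).
  have ne' : b1 != b2 by apply/eqP => e; apply: ne; rewrite e.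
  have hz := adm_pairs hn tinj adm ne' hs.
  case: (sigma_pm (theta b1)) => h1.
  + left; split; first by apply/(odd_sigma (theta b1)).
    apply/(even_sigma hn (theta _)); move: hz; rewrite h1 => /eqP; rewrite addrC addr_eq0 => /eqP.
    by [].
  + right; split; first by apply/(even_sigma hn (theta _)).
    apply/(odd_sigma (theta b2)); move: hz; rewrite h1 => /eqP; rewrite addrC addr_eq0 opprK => /eqP.
    by [].
- move=> H; split; first exact: hM.
  apply: (pairs_adm hn tinj) => b1 b2 ne hs.
  have [C' hC'] := hM.2 _ (maxchain_chain b1).
  have [D' hD'] := hM.2 _ (maxchain_chain b2).
  have ne' : chain b1 <> chain b2 by move/chain_inj => e; move: ne; rewrite e eqxx.
  have := H _ _ C' D' (maxchain_chain b1) (maxchain_chain b2) ne' hs hC' hD'.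
  rewrite (maps_det hC') (maps_det hD').
  case=> [[/odd_sigma -> /(even_sigma hn) ->]|[/(even_sigma hn) -> /odd_sigma ->]].
  + by rewrite subrr.
  + by rewrite addNr.
Qed.
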